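(* For every admissible sequence of bins $\sigma$ and all integers $s',\ell',k\ge 0$ with $2k\ge s'+2\ell'$, $$R(\sigma,0,k)\le \mathrm{OPT}(\sigma,s',\ell')+\min\{0,\ell'-s'\}\,S+(k-\ell')M.$$
   Context: Fix an integer $S>1$, $L=2S-1$, $M=4S-3$. Bins have integer sizes in $[S,M]$ and arrive in a sequence $\sigma$, admissible if it ends with at least as many bins of size $M$ as there are items under consideration. A packing assigns every item to a bin with total item size in each bin at most the bin size; its cost is the sum of the sizes of bins receiving at least one item. A packing is valid if each empty bin is smaller than every item packed in a later bin. A bin is wasteful if its empty space is at least the size of some item packed in a later bin; a packing is thrifty if no bin is wasteful. A partial packing of a finite sequence of bins is reasonable if every bin $b$ of that sequence contains: one item of size $S$ if $\mathrm{size}(b)\in[S,L-1]$; one item of size $L$ if $\mathrm{size}(b)=L$; two items of size $S$ or one item of size $L$ if $\mathrm{size}(b)\in[L+1,L+S-1]$; one item of size $S$ and one of size $L$ if $\mathrm{size}(b)=L+S$; three items of size $S$ or one item of size $S$ and one of size $L$ if $\mathrm{size}(b)\in[L+S+1,2L-1]$. The key bin of a packing is the first bin after which no item of size $L$ remains unpacked or at most two items of size $S$ remain unpacked; the front is the restriction of the packing to the prefix ending with the key bin. A packing is reasonable if it is thrifty and its front is reasonable. $\mathrm{OPT}(\sigma,s,\ell)$ is the minimum cost of a valid packing of $s$ items of size $S$ and $\ell$ items of size $L$ into $\sigma$; $R(\sigma,s,\ell)$ is the maximum cost of a reasonable packing of these items into $\sigma$. *)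

(* Defs.v *)
From mathcomp Require Import all_boot all_order all_algebra.
Set Implicit Arguments. Unset Strict Implicit. Unset Printing Implicit Defensive.

Definition Lsz (S : nat) : nat := 2 * S - 1.
Definition Msz (S : nat) : nat := 4 * S - 3.

(* A sequence of bins is a list of bin sizes; bins are indexed 0 .. size sigma - 1. *)
Definition bin (sigma : seq nat) (i : nat) : nat := nth 0 sigma i.

Definition bins_ok (S : nat) (sigma : seq nat) : Prop :=
  forall i, i < size sigma -> S <= bin sigma i <= Msz S.

Definition admissible (S : nat) (sigma : seq nat) (n : nat) : Prop :=
  n <= size sigma /\
  forall i, size sigma - n <= i < size sigma -> bin sigma i = Msz S.

(* A packing of items of sizes S and L is described (items of equal size being
   indistinguishable) by, for every bin i, the pair (number of items of size S,
   number of items of size L) packed into bin i. *)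
Definition packing := seq (nat * nat).
Definition nS (P : packing) (i : nat) : nat := (nth (0, 0) P i).1.
Definition nL (P : packing) (i : nat) : nat := (nth (0, 0) P i).2.
Definition load (S : nat) (P : packing) (i : nat) : nat :=
  nS P i * S + nL P i * Lsz S.

Definition is_packing (S : nat) (sigma : seq nat) (s l : nat) (P : packing) : Prop :=
  size P = size sigma /\
  \sum_(0 <= i < size sigma) nS P i = s /\
  \sum_(0 <= i < size sigma) nL P i = l /\
  forall i, i < size sigma -> load S P i <= bin sigma i.

Definition used (P : packing) (i : nat) : bool := 0 < nS P i + nL P i.

Definition cost (sigma : seq nat) (P : packing) : nat :=
  \sum_(0 <= i < size sigma | used P i) bin sigma i.

Definition valid (S : nat) (sigma : seq nat) (P : packing) : Prop :=
  forall i j, i < j -> j < size sigma -> ~~ used P i ->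
    (0 < nS P j -> bin sigma i < S) /\ (0 < nL P j -> bin sigma i < Lsz S).

Definition space (S : nat) (sigma : seq nat) (P : packing) (i : nat) : nat :=
  bin sigma i - load S P i.

Definition wasteful (S : nat) (sigma : seq nat) (P : packing) (i : nat) : Prop :=
  exists j, i < j /\ j < size sigma /\
    ((0 < nS P j /\ S <= space S sigma P i) \/
     (0 < nL P j /\ Lsz S <= space S sigma P i)).

Definition thrifty (S : nat) (sigma : seq nat) (P : packing) : Prop :=
  forall i, i < size sigma -> ~ wasteful S sigma P i.

(* after bin i, no item of size L remains unpacked, or at most two items of
   size S remain unpacked *)
Definition key_cond (sigma : seq nat) (P : packing) (i : nat) : Prop :=
  \sum_(i.+1 <= j < size sigma) nL P j = 0 \/
  \sum_(i.+1 <= j < size sigma) nS P j <= 2.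

(* bin i belongs to the front, i.e. i <= key bin (the first bin satisfying key_cond) *)
Definition in_front (sigma : seq nat) (P : packing) (i : nat) : Prop :=
  forall j, j < i -> ~ key_cond sigma P j.

Definition reasonable_bin (S sz a b : nat) : Prop :=
  (S <= sz <= Lsz S - 1 -> a = 1 /\ b = 0) /\
  (sz = Lsz S -> a = 0 /\ b = 1) /\
  (Lsz S + 1 <= sz <= Lsz S + S - 1 -> (a = 2 /\ b = 0) \/ (a = 0 /\ b = 1)) /\
  (sz = Lsz S + S -> a = 1 /\ b = 1) /\
  (Lsz S + S + 1 <= sz <= 2 * Lsz S - 1 -> (a = 3 /\ b = 0) \/ (a = 1 /\ b = 1)).

Definition reasonable_front (S : nat) (sigma : seq nat) (P : packing) : Prop :=
  forall i, i < size sigma -> in_front sigma P i ->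
    reasonable_bin S (bin sigma i) (nS P i) (nL P i).

Definition reasonable (S : nat) (sigma : seq nat) (P : packing) : Prop :=
  thrifty S sigma P /\ reasonable_front S sigma P.

Definition is_OPT (S : nat) (sigma : seq nat) (s l v : nat) : Prop :=
  (exists P, is_packing S sigma s l P /\ valid S sigma P /\ cost sigma P = v) /\
  (forall P, is_packing S sigma s l P -> valid S sigma P -> v <= cost sigma P).

Definition is_R (S : nat) (sigma : seq nat) (s l v : nat) : Prop :=
  (exists P, is_packing S sigma s l P /\ reasonable S sigma P /\ cost sigma P = v) /\
  (forall P, is_packing S sigma s l P -> reasonable S sigma P -> cost sigma P <= v).

(* Main.v *)
Require Import Defs.
From mathcomp Require Import all_boot all_order all_algebra.
From mathcomp Require Import zify.
From Stdlib Require Import Classical.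
Import Order.TTheory GRing.Theory Num.Theory.

Lemma sum_le_nat n (F G : nat -> nat) :
  (forall i, i < n -> F i <= G i) ->
  \sum_(0 <= i < n) F i <= \sum_(0 <= i < n) G i.
Proof.
elim: n => [|n IH] H; first by rewrite !big_geq.
rewrite !big_nat_recr //=; apply: leq_add; first by apply: IH => i Hi; apply: H; lia.
by apply: H.
Qed.

Lemma term_le_sum n (F : nat -> nat) i :
  i < n -> F i <= \sum_(0 <= j < n) F j.
Proof.
elim: n => [|n IH] Hi; first by [].
rewrite big_nat_recr //=.
case: (ltngtP i n) => H.
- have := IH H; lia.
- lia.
- subst; lia.
Qed.

Theorem lemma8 (S : nat) (hS : 1 < S) (sigma : seq nat) (s' l' k : nat)
  (hbins : bins_ok S sigma)
  (hadmR : admissible S sigma k)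
  (hadmO : admissible S sigma (s' + l'))
  (hk : s' + 2 * l' <= 2 * k)
  (r o : nat) (hR : is_R S sigma 0 k r) (hO : is_OPT S sigma s' l' o) :
  (r%:Z <= o%:Z + Order.min 0 (l'%:Z - s'%:Z) * S%:Z
          + (k%:Z - l'%:Z) * (Msz S)%:Z)%R.
Proof.
case: hR => [[P [[szP [sSP [sLP ldP]]] [[thrP _] cP]]] _].
case: hO => [[Q [[szQ [sSQ [sLQ ldQ]]] [vQ cQ]]] _].
set n := size sigma in szP szQ sSP sLP ldP sSQ sLQ ldQ thrP vQ.
set M := Msz S.
have hM : M = 4 * S - 3 by [].
have hL : Lsz S = 2 * S - 1 by [].
have hb : forall i, i < n -> S <= bin sigma i <= M by exact: hbins.
have nSP0 : forall i, i < n -> nS P i = 0.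
  by move=> i Hi; have := term_le_sum _ (nS P) _ Hi; rewrite sSP; lia.
have nLP1 : forall i, i < n -> nL P i <= 1.
  move=> i Hi; have := ldP i Hi; have := hb i Hi; rewrite /Defs.load hL -/M hM.
  case: (nL P i) => [|[|t]] //; nia.
have nLQ1 : forall i, i < n -> nL Q i <= 1.
  move=> i Hi; have := ldQ i Hi; have := hb i Hi; rewrite /Defs.load hL -/M hM.
  case: (nL Q i) => [|[|t]] //; nia.
have eR : r = \sum_(0 <= i < n) nL P i * bin sigma i.
  rewrite -cP /cost big_mkcond /=; apply: eq_big_nat => i Hi.
  rewrite /used nSP0 //; have := nLP1 i (andP Hi).2.
  case: (nL P i) => [|[|t]] //= _; by rewrite ?mul0n ?mul1n.
have eO : o = \sum_(0 <= i < n) (if used Q i then bin sigma i else 0).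
  by rewrite -cQ /cost big_mkcond.
have eK : k = \sum_(0 <= i < n) nL P i by [].
have eS : s' = \sum_(0 <= i < n) nS Q i by [].
have eL : l' = \sum_(0 <= i < n) nL Q i by [].
have kl : l' <= k by lia.
have hSM : s' * S + l' * M <= k * M.
  have : s' * S <= (k - l') * M.
    have -> : M = 2 * S + (2 * S - 3) by rewrite hM; lia.
    nia.
  nia.
have hmin2 : (l' <= s')%N -> (Order.min 0 (l'%:Z - s'%:Z) = l'%:Z - s'%:Z)%R.
  move=> H; apply/min_idPr; lia.
have hmin3 : (s' <= l')%N -> (Order.min 0 (l'%:Z - s'%:Z) = 0)%R.
  move=> H; apply/min_idPl; lia.
have Pbig : forall i, i < n -> 0 < nL P i -> Lsz S <= bin sigma i.
  move=> i Hi H; have := ldP i Hi; rewrite /Defs.load nSP0 //; nia.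
have Pthr : forall i j, i < j -> j < n -> 0 < nL P j -> Lsz S <= bin sigma i ->
    0 < nL P i.
  move=> i j Hij Hj Hp Hb; case: (posnP (nL P i)) => // H0.
  exfalso; apply: (thrP i); first lia.
  exists j; split => //; split => //; right; split => //.
  rewrite /Defs.space /Defs.load; rewrite H0 (nSP0 i); first by rewrite !mul0n subn0.
  lia.
have Qval : forall i j, i < j -> j < n -> ~~ used Q i -> used Q j ->
    bin sigma i < Lsz S.
  move=> i j Hij Hj Hu Huj; have [h1 h2] := vQ i j Hij Hj Hu.
  move: Huj; rewrite /used; case: (posnP (nS Q j)) => Hs.
    rewrite Hs add0n => /h2 //.
  move=> _; have := h1 Hs; rewrite hL; lia.
have cases : (forall i, i < n -> 0 < nL P i -> used Q i) \/
             (forall i, i < n -> used Q i -> Lsz S <= bin sigma i -> 0 < nL P i).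
  case: (classic (forall i, i < n -> 0 < nL P i -> used Q i)) => H; [by left|right].
  have [i0 [Hi0 [Hp0 Hu0]]] : exists i, i < n /\ 0 < nL P i /\ ~~ used Q i.
    apply: NNPP => C; apply: H => i Hi Hp; apply: NNPP => Hu; apply: C.
    by exists i; split => //; split => //; apply/negP.
  move=> j Hj Hu Hb.
  case: (ltngtP j i0) => Hji.
  - by apply: (Pthr j i0).
  - have := Qval i0 j Hji Hj Hu0 Hu; have := Pbig i0 Hi0 Hp0; lia.
  - by subst; rewrite Hu in Hu0.
case: cases => C.
-
  have ro : r <= o.
    rewrite eR eO; apply: sum_le_nat => i Hi.
    have := nLP1 i Hi; case E: (nL P i) => [|[|t]] H1; [by rewrite mul0n | | by []].
    by have := C i Hi; rewrite E => /(_ isT) ->; rewrite mul1n.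
  case: (leqP l' s') => H.
  + rewrite hmin2 //; rewrite /M in hSM; lia.
  + rewrite hmin3; last lia; rewrite /M in hSM; lia.
- have key : forall i, i < n ->
    nL P i * bin sigma i + nS Q i * S + nL Q i * M <=
    (if used Q i then bin sigma i else 0) + nL P i * M + nL Q i * S
    /\ nL P i * bin sigma i + nL Q i * M <=
    (if used Q i then bin sigma i else 0) + nL P i * M.
    move=> i Hi; have := C i Hi; have := nLP1 i Hi; have := nLQ1 i Hi.
    have := ldQ i Hi; have := hb i Hi; rewrite /Defs.load /used hL hM.
    case: (nL P i) => [|[|t]] //; case: (nL Q i) => [|[|t']] //;
      case: (nS Q i) => [|[|u]] //=; nia.
  have s1 : r + s' * S + l' * M <= o + k * M + l' * S.
    rewrite eR eO eK eS eL !big_distrl -!big_split /=.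
    by apply: sum_le_nat => i Hi; case: (key i Hi).
  have s2 : r + l' * M <= o + k * M.
    rewrite eR eO eK eL !big_distrl -!big_split /=.
    by apply: sum_le_nat => i Hi; case: (key i Hi).
  case: (leqP l' s') => H.
  + rewrite hmin2 //; rewrite /M in s1; lia.
  + rewrite hmin3; last lia; rewrite /M in s2; lia.
Qed.
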